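(* Let $(X,d)$ be a complete metric space, $\lambda$ a convex mean on $X$ and $\nu$ a nonexpansive 2-mean on $X$. Then the iterated composition $\lambda*\nu$ (resp. the skewed iterated composition $\lambda*_s\nu$) exists and is nonexpansive.
   Context: A 2-mean is a map $\mu:X^2\to X$ with $\mu(x,x)=x$. A convex mean is a symmetric 2-mean $\lambda$ with $d(\lambda(x,z),\lambda(y,z))\le\frac12 d(x,y)$ for all $x,y,z$. Nonexpansive: $d(\nu(x_1,x_2),\nu(y_1,y_2))\le\max\{d(x_1,y_1),d(x_2,y_2)\}$. Iterated composition: set $\lambda_1=\lambda$, $\nu_1=\nu$, $\lambda_{n+1}(x,y)=\lambda(\lambda_n(x,y),\nu_n(x,y))$, $\nu_{n+1}(x,y)=\nu(\lambda_n(x,y),\nu_n(x,y))$; skewed iterated composition: $\nu_{n+1}(x,y)=\nu(\lambda_n(x,y),\nu_n(x,y))$, $\lambda_{n+1}(x,y)=\lambda(\lambda_n(x,y),\nu_{n+1}(x,y))$. If there is a 2-mean $\mu$ with $\lim_n\lambda_n(x,y)=\mu(x,y)=\lim_n\nu_n(x,y)$ for all $x,y$, then $\mu$ is the iterated composition $\lambda*\nu$ (resp. skewed iterated composition $\lambda*_s\nu$). *)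

(* Defs.v *)
From Stdlib Require Import Reals.
Open Scope R_scope.

Definition is_metric {X : Type} (d : X -> X -> R) : Prop :=
  (forall x y, 0 <= d x y) /\
  (forall x y, d x y = 0 <-> x = y) /\
  (forall x y, d x y = d y x) /\
  (forall x y z, d x z <= d x y + d y z).

Definition converges_to {X : Type} (d : X -> X -> R) (u : nat -> X) (l : X) : Prop :=
  forall eps, 0 < eps -> exists N, forall n, (N <= n)%nat -> d (u n) l < eps.

Definition cauchy_seq {X : Type} (d : X -> X -> R) (u : nat -> X) : Prop :=
  forall eps, 0 < eps -> exists N, forall m n, (N <= m)%nat -> (N <= n)%nat ->
    d (u m) (u n) < eps.

Definition complete_metric {X : Type} (d : X -> X -> R) : Prop :=
  is_metric d /\
  forall u : nat -> X, cauchy_seq d u -> exists l, converges_to d u l.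

Definition two_mean {X : Type} (mu : X -> X -> X) : Prop :=
  forall x, mu x x = x.

Definition convex_mean {X : Type} (d : X -> X -> R) (lam : X -> X -> X) : Prop :=
  two_mean lam /\
  (forall x y, lam x y = lam y x) /\
  (forall x y z, d (lam x z) (lam y z) <= / 2 * d x y).

Definition nonexpansive {X : Type} (d : X -> X -> R) (nu : X -> X -> X) : Prop :=
  forall x1 x2 y1 y2, d (nu x1 x2) (nu y1 y2) <= Rmax (d x1 y1) (d x2 y2).

(* Iterated composition: (λ_n, ν_n) with λ_1 = λ, ν_1 = ν;
   iter_pair n returns (λ_{n+1}(x,y), ν_{n+1}(x,y)). *)
Fixpoint iter_pair {X : Type} (lam nu : X -> X -> X) (n : nat) (x y : X) : X * X :=
  match n with
  | O => (lam x y, nu x y)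
  | S k => let (a, b) := iter_pair lam nu k x y in (lam a b, nu a b)
  end.

Fixpoint iter_pair_s {X : Type} (lam nu : X -> X -> X) (n : nat) (x y : X) : X * X :=
  match n with
  | O => (lam x y, nu x y)
  | S k => let (a, b) := iter_pair_s lam nu k x y in
           let b' := nu a b in (lam a b', b')
  end.

Definition is_iterated_composition {X : Type} (d : X -> X -> R)
    (lam nu mu : X -> X -> X) : Prop :=
  two_mean mu /\
  forall x y,
    converges_to d (fun n => fst (iter_pair lam nu n x y)) (mu x y) /\
    converges_to d (fun n => snd (iter_pair lam nu n x y)) (mu x y).

Definition is_skewed_iterated_composition {X : Type} (d : X -> X -> R)
    (lam nu mu : X -> X -> X) : Prop :=
  two_mean mu /\
  forall x y,
    converges_to d (fun n => fst (iter_pair_s lam nu n x y)) (mu x y) /\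
    converges_to d (fun n => snd (iter_pair_s lam nu n x y)) (mu x y).

(* Main.v *)
Require Import Defs.
From Stdlib Require Import Reals.
From Stdlib Require Import Lra Lia IndefiniteDescription.
Open Scope R_scope.

Lemma small_pow (C eps : R) : 0 <= C -> 0 < eps ->
  exists N, forall n, (N <= n)%nat -> C * (/2)^n < eps.
Proof.
  intros HC He.
  assert (Hr : Rabs (/2) < 1) by (rewrite Rabs_pos_eq; lra).
  destruct (pow_lt_1_zero (/2) Hr (eps / (C+1))) as [N HN].
  { apply Rdiv_lt_0_compat; lra. }
  exists N. intros n Hn. specialize (HN n Hn).
  assert (Hp : 0 <= (/2)^n) by (apply pow_le; lra).
  rewrite Rabs_pos_eq in HN by exact Hp.
  assert (E : eps = (C+1) * (eps / (C+1))) by (field; lra).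
  assert (0 < eps / (C+1)) by (apply Rdiv_lt_0_compat; lra).
  nra.
Qed.

Lemma geom_bound (X : Type) (d : X -> X -> R) (u : nat -> X) (C : R) :
  is_metric d ->
  (forall n, d (u (S n)) (u n) <= C * (/2)^n) ->
  forall n k, d (u (n+k)%nat) (u n) <= 2*C*(/2)^n - 2*C*(/2)^(n+k).
Proof.
  intros [H0 [H1 [H2 H3]]] Hs n k. induction k.
  - rewrite Nat.add_0_r. assert (d (u n) (u n) = 0) by (apply H1; reflexivity). lra.
  - replace (n + S k)%nat with (S (n+k)) by lia.
    specialize (H3 (u (S (n+k))) (u (n+k)%nat) (u n)).
    specialize (Hs (n+k)%nat). simpl pow. simpl pow in Hs. lra.
Qed.

Lemma geom_cauchy (X : Type) (d : X -> X -> R) (u : nat -> X) (C : R) :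
  is_metric d -> 0 <= C ->
  (forall n, d (u (S n)) (u n) <= C * (/2)^n) ->
  cauchy_seq d u.
Proof.
  intros Hm HC Hs eps He.
  destruct (small_pow (2*C) eps) as [N HN]; try lra.
  exists N. intros m n Hm' Hn'.
  assert (Hgen : forall a b, (N <= b)%nat -> (b <= a)%nat -> d (u a) (u b) < eps).
  { intros a b Hb Hba. replace a with (b + (a - b))%nat by lia.
    pose proof (geom_bound X d u C Hm Hs b (a-b)%nat).
    assert (0 <= (/2)^(b + (a-b))) by (apply pow_le; lra).
    specialize (HN b Hb). nra. }
  destruct (Nat.le_gt_cases n m).
  - apply Hgen; lia.
  - destruct Hm as [_ [_ [Hsym _]]]. rewrite Hsym. apply Hgen; lia.
Qed.

Lemma lim_unique (X : Type) (d : X -> X -> R) (u : nat -> X) (l1 l2 : X) :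
  is_metric d -> converges_to d u l1 -> converges_to d u l2 -> l1 = l2.
Proof.
  intros [H0 [H1 [H2 H3]]] A B. apply H1.
  destruct (Rle_lt_dec (d l1 l2) 0) as [h|h]. { specialize (H0 l1 l2). lra. }
  exfalso.
  destruct (A (d l1 l2 / 2)) as [N1 HN1]; [lra|].
  destruct (B (d l1 l2 / 2)) as [N2 HN2]; [lra|].
  specialize (HN1 (Nat.max N1 N2) ltac:(lia)).
  specialize (HN2 (Nat.max N1 N2) ltac:(lia)).
  specialize (H3 l1 (u (Nat.max N1 N2)) l2). rewrite (H2 l1 (u (Nat.max N1 N2))) in H3. lra.
Qed.

Lemma generic (X:Type) (d: X->X->R) (step0 step: X*X -> X*X) (s: nat -> X -> X -> X*X) :
 complete_metric d ->
 (forall p, d (fst (step0 p)) (snd (step0 p)) <= /2 * d (fst p) (snd p)) ->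
 (forall p q, Rmax (d (fst (step0 p)) (fst (step0 q))) (d (snd (step0 p)) (snd (step0 q)))
    <= Rmax (d (fst p) (fst q)) (d (snd p) (snd q))) ->
 (forall x, step0 (x,x) = (x,x)) ->
 (forall p, d (fst (step p)) (snd (step p)) <= /2 * d (fst p) (snd p)) ->
 (forall p, d (fst (step p)) (fst p) <= d (fst p) (snd p)) ->
 (forall p q, Rmax (d (fst (step p)) (fst (step q))) (d (snd (step p)) (snd (step q)))
    <= Rmax (d (fst p) (fst q)) (d (snd p) (snd q))) ->
 (forall x, step (x,x) = (x,x)) ->
 (forall x y, s 0%nat x y = step0 (x,y)) ->
 (forall n x y, s (S n) x y = step (s n x y)) ->
 exists mu, two_mean mu /\
   (forall x y, converges_to d (fun n => fst (s n x y)) (mu x y) /\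
                converges_to d (fun n => snd (s n x y)) (mu x y)) /\
   nonexpansive d mu.
Proof.
  intros [Hm Hc] Q1 Q3 Q4 P1 P2 P3 P4 S0 SS.
  pose proof Hm as [H0 [H1 [H2 H3]]].
  assert (DB : forall n x y, d (fst (s n x y)) (snd (s n x y)) <= d x y * (/2)^n).
  { intros n x y. induction n.
    - rewrite S0. specialize (Q1 (x,y)). simpl in *. specialize (H0 x y). lra.
    - rewrite SS. specialize (P1 (s n x y)). simpl pow. lra. }
  assert (Conv : forall x y, exists l,
     converges_to d (fun n => fst (s n x y)) l /\ converges_to d (fun n => snd (s n x y)) l).
  { intros x y.
    assert (Hst : forall n, d (fst (s (S n) x y)) (fst (s n x y)) <= d x y * (/2)^n).
    { intros n. rewrite SS. specialize (P2 (s n x y)). specialize (DB n x y). lra. }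
    destruct (Hc _ (geom_cauchy X d _ (d x y) Hm (H0 x y) Hst)) as [l Hl].
    exists l. split; [exact Hl|].
    intros eps He.
    destruct (Hl (eps/2)) as [N1 HN1]; [lra|].
    destruct (small_pow (d x y) (eps/2) (H0 x y)) as [N2 HN2]; [lra|].
    exists (Nat.max N1 N2). intros n Hn.
    specialize (HN1 n ltac:(lia)). specialize (HN2 n ltac:(lia)).
    pose proof (H3 (snd (s n x y)) (fst (s n x y)) l) as T. rewrite (H2 (snd (s n x y)) (fst (s n x y))) in T.
    specialize (DB n x y). simpl in HN1. lra. }
  set (mu := fun x y => proj1_sig (constructive_indefinite_description _ (Conv x y))).
  assert (Hmu : forall x y, converges_to d (fun n => fst (s n x y)) (mu x y) /\ converges_to d (fun n => snd (s n x y)) (mu x y)).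
  { intros x y. exact (proj2_sig (constructive_indefinite_description _ (Conv x y))). }
  clearbody mu.
  exists mu.
  split; [|split].
  - intros x. destruct (Hmu x x) as [Hl _].
    symmetry. apply (lim_unique X d (fun n => fst (s n x x))); auto.
    assert (E : forall n, s n x x = (x,x)).
    { induction n. rewrite S0; apply Q4. rewrite SS, IHn; apply P4. }
    intros eps He. exists 0%nat. intros n _. rewrite E. simpl.
    assert (d x x = 0) by (apply H1; reflexivity). lra.
  - exact Hmu.
  - intros x1 x2 y1 y2.
    destruct (Hmu x1 x2) as [Hl _]. destruct (Hmu y1 y2) as [Hl' _].
    set (l := mu x1 x2) in *. set (l' := mu y1 y2) in *.
    assert (NE : forall n, Rmax (d (fst (s n x1 x2)) (fst (s n y1 y2)))
                                (d (snd (s n x1 x2)) (snd (s n y1 y2)))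
                           <= Rmax (d x1 y1) (d x2 y2)).
    { induction n.
      - rewrite !S0. apply (Q3 (x1,x2) (y1,y2)).
      - rewrite !SS. eapply Rle_trans; [apply P3|exact IHn]. }
    apply Rle_plus_epsilon. intros eps He.
    destruct (Hl (eps/2)) as [N1 HN1]; [lra|].
    destruct (Hl' (eps/2)) as [N2 HN2]; [lra|].
    set (n := Nat.max N1 N2).
    specialize (HN1 n ltac:(lia)). specialize (HN2 n ltac:(lia)).
    specialize (NE n). simpl in HN1, HN2.
    pose proof (Rmax_l (d (fst (s n x1 x2)) (fst (s n y1 y2)))
                       (d (snd (s n x1 x2)) (snd (s n y1 y2)))).
    pose proof (H3 l (fst (s n x1 x2)) l').
    pose proof (H3 (fst (s n x1 x2)) (fst (s n y1 y2)) l').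
    rewrite (H2 l (fst (s n x1 x2))) in *. lra.
Qed.

Theorem proposition6p3 (X : Type) (d : X -> X -> R) (lam nu : X -> X -> X) :
  complete_metric d -> convex_mean d lam -> two_mean nu -> nonexpansive d nu ->
  (exists mu, is_iterated_composition d lam nu mu /\ nonexpansive d mu) /\
  (exists mu, is_skewed_iterated_composition d lam nu mu /\ nonexpansive d mu).
Proof.
  intros Hcm [Lid [Lsym Lc]] Nid Nne.
  pose proof Hcm as [[H0 [H1 [H2 H3]]] _].
  assert (Dxx : forall x, d x x = 0) by (intros; apply H1; reflexivity).
  assert (La : forall a b, d (lam a b) a <= /2 * d a b).
  { intros a b. rewrite Lsym. pose proof (Lc b a a) as T. rewrite Lid in T. rewrite (H2 b a) in T. exact T. }
  assert (Lb : forall a b, d (lam a b) b <= /2 * d a b).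
  { intros a b. pose proof (Lc a b b) as T. rewrite Lid in T. exact T. }
  assert (L2 : forall a b a' b', d (lam a b) (lam a' b') <= /2 * d a a' + /2 * d b b').
  { intros a b a' b'. pose proof (H3 (lam a b) (lam a' b) (lam a' b')).
    pose proof (Lc a a' b). rewrite (Lsym a' b), (Lsym a' b') in *.
    pose proof (Lc b b' a'). lra. }
  assert (Na : forall a b, d (nu a b) a <= d a b).
  { intros a b. pose proof (Nne a b a a) as T. rewrite Nid, Dxx, (H2 b a) in T.
    rewrite Rmax_right in T by apply H0. exact T. }
  assert (Nm : forall a b m, d (nu a b) m <= Rmax (d a m) (d b m)).
  { intros a b m. pose proof (Nne a b m m) as T. rewrite Nid in T. exact T. }
  split.
  - destruct (generic X d (fun p => (lam (fst p) (snd p), nu (fst p) (snd p)))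
                (fun p => (lam (fst p) (snd p), nu (fst p) (snd p)))
                (iter_pair lam nu)) as [mu [A [B C]]]; auto.
    + intros [a b]; simpl. rewrite H2. eapply Rle_trans; [apply Nm|].
      apply Rmax_lub; [rewrite H2; auto|rewrite (H2 b (lam a b)); auto].
    + intros [a b] [a' b']; simpl. apply Rmax_lub.
      * pose proof (L2 a b a' b'). pose proof (Rmax_l (d a a') (d b b')).
        pose proof (Rmax_r (d a a') (d b b')). lra.
      * apply Nne.
    + intros x; simpl. rewrite Lid, Nid. reflexivity.
    + intros [a b]; simpl. rewrite H2. eapply Rle_trans; [apply Nm|].
      apply Rmax_lub; [rewrite H2; auto|rewrite (H2 b (lam a b)); auto].
    + intros [a b]; simpl. eapply Rle_trans; [apply La|]. pose proof (H0 a b). lra.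
    + intros [a b] [a' b']; simpl. apply Rmax_lub.
      * pose proof (L2 a b a' b'). pose proof (Rmax_l (d a a') (d b b')).
        pose proof (Rmax_r (d a a') (d b b')). lra.
      * apply Nne.
    + intros x; simpl. rewrite Lid, Nid. reflexivity.
    + intros n x y; simpl. destruct (iter_pair lam nu n x y); reflexivity.
    + exists mu. split; [split|]; auto.
  - destruct (generic X d (fun p => (lam (fst p) (snd p), nu (fst p) (snd p)))
                (fun p => (lam (fst p) (nu (fst p) (snd p)), nu (fst p) (snd p)))
                (iter_pair_s lam nu)) as [mu [A [B C]]]; auto.
    + intros [a b]; simpl. rewrite H2. eapply Rle_trans; [apply Nm|].
      apply Rmax_lub; [rewrite H2; auto|rewrite (H2 b (lam a b)); auto].
    + intros [a b] [a' b']; simpl. apply Rmax_lub.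
      * pose proof (L2 a b a' b'). pose proof (Rmax_l (d a a') (d b b')).
        pose proof (Rmax_r (d a a') (d b b')). lra.
      * apply Nne.
    + intros x; simpl. rewrite Lid, Nid. reflexivity.
    + intros [a b]; simpl. eapply Rle_trans; [apply Lb|].
      rewrite H2. pose proof (Na a b). lra.
    + intros [a b]; simpl. eapply Rle_trans; [apply La|].
      rewrite H2. pose proof (Na a b). pose proof (H0 a b). pose proof (H0 a (nu a b)). lra.
    + intros [a b] [a' b']; simpl. pose proof (Nne a b a' b').
      apply Rmax_lub; auto.
      pose proof (L2 a (nu a b) a' (nu a' b')). pose proof (Rmax_l (d a a') (d b b')). lra.
    + intros x; simpl; rewrite Nid, Lid; reflexivity.
    + intros n x y; simpl; destruct (iter_pair_s lam nu n x y); reflexivity.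
    + exists mu. split; [split|]; auto.
Qed.
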